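(* Let $C_1,h>0$ and $\varphi_1(x)=\frac{1}{C_1}\varphi_0(x/h)$. Let $f:\mathbb{R}\to\mathbb{R}$ be convex with $|f'|\le 1/(C_1h)$. Then for every $x\in\mathbb{R}$, $(f\,\square\,\varphi_1)(x)\le f(x)-\frac{C_1}{2}\,|(Df)(x)|^2.$
   Context: $\varphi_0(x)=\frac12x^2$ for $|x|\le1$ and $\varphi_0(x)=|x|-\frac12$ for $|x|>1$; $(f\,\square\,\varphi)(x)=\inf_y\{f(y)+\varphi(x-y)\}$; $f'(x)=\limsup_{s\to0}(f(x+s)-f(x))/s$. For convex $f$, let $x_0$ be a point where $f$ attains its minimum; if no minimum is attained, $x_0=-\infty$ if $f$ is non-decreasing and $x_0=+\infty$ if $f$ is non-increasing. The discrete gradient with step $h$ is $(Df)(x)=f(x)-f(x-h)$ for $x>x_0+h$, $(Df)(x)=f(x)-f(x_0)$ for $x\in[x_0-h,x_0+h]$, $(Df)(x)=f(x)-f(x+h)$ for $x<x_0-h$. *)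

(* Defs.v *)
From Stdlib Require Import Reals Lra Classical ClassicalEpsilon ClassicalDescription.
Open Scope R_scope.

Definition phi0 (x : R) : R :=
  if Rle_dec (Rabs x) 1 then x ^ 2 / 2 else Rabs x - 1 / 2.

Definition is_glb (E : R -> Prop) (m : R) : Prop :=
  (forall v, E v -> m <= v) /\ (forall b, (forall v, E v -> b <= v) -> b <= m).

(* infimum of E (junk value 0 if E has no real infimum) *)
Definition Inf (E : R -> Prop) : R :=
  match excluded_middle_informative (exists m, is_glb E m) with
  | left H => proj1_sig (constructive_indefinite_description _ H)
  | right _ => 0
  end.

Definition infconv (f phi : R -> R) (x : R) : R :=
  Inf (fun v => exists y, v = f y + phi (x - y)).

Definition is_limsup0 (g : R -> R) (l : R) : Prop :=
  (forall eps, 0 < eps -> exists delta, 0 < delta /\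
     forall s, s <> 0 -> Rabs s < delta -> g s <= l + eps) /\
  (forall eps delta, 0 < eps -> 0 < delta ->
     exists s, s <> 0 /\ Rabs s < delta /\ l - eps <= g s).

(* f'(x) = l, where f'(x) := limsup_{s->0} (f(x+s) - f(x))/s *)
Definition upper_deriv (f : R -> R) (x l : R) : Prop :=
  is_limsup0 (fun s => (f (x + s) - f x) / s) l.

Definition convex (f : R -> R) : Prop :=
  forall x y t, 0 <= t <= 1 -> f (t * x + (1 - t) * y) <= t * f x + (1 - t) * f y.

Inductive ext_point : Type := Fin (r : R) | MInf | PInf.

Definition valid_x0 (f : R -> R) (x0 : ext_point) : Prop :=
  match x0 with
  | Fin r => forall y, f r <= f y
  | MInf => (~ exists r, forall y, f r <= f y) /\ (forall a b, a <= b -> f a <= f b)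
  | PInf => (~ exists r, forall y, f r <= f y) /\ (forall a b, a <= b -> f b <= f a)
  end.

Definition Dgrad (f : R -> R) (h : R) (x0 : ext_point) (x : R) : R :=
  match x0 with
  | Fin r =>
      if Rlt_dec (r + h) x then f x - f (x - h)
      else if Rle_dec (r - h) x then f x - f r
      else f x - f (x + h)
  | MInf => f x - f (x - h)
  | PInf => f x - f (x + h)
  end.

(* Main.v *)
Require Import Defs.
From Stdlib Require Import Reals Lra Classical ClassicalEpsilon ClassicalDescription.
Open Scope R_scope.

Lemma conv3 f (Hc : convex f) p m q : p < m < q ->
  f m * (q - p) <= (q - m) * f p + (m - p) * f q.
Proof.
  intros Hpm.
  set (t := (q - m) / (q - p)).
  assert (Ht : 0 <= t <= 1).
  { unfold t; split.
    - unfold Rdiv; apply Rmult_le_pos; [lra|left; apply Rinv_0_lt_compat; lra].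
    - apply (Rmult_le_reg_r (q - p)); [lra|].
      unfold Rdiv; rewrite Rmult_assoc, Rinv_l; lra. }
  assert (Hm : t * p + (1 - t) * q = m) by (unfold t; field; lra).
  pose proof (Hc p q t Ht) as H. rewrite Hm in H.
  apply Rle_trans with ((t * f p + (1 - t) * f q) * (q - p)).
  - apply Rmult_le_compat_r; lra.
  - right; unfold t; field; lra.
Qed.

Lemma lip_up f L (Hc : convex f)
  (Hd : forall x, exists l, upper_deriv f x l /\ Rabs l <= L) a b :
  a < b -> f b - f a <= L * (b - a).
Proof.
  intros Hab. destruct (Hd b) as [l [[H1 _] Hl]].
  assert (Hl2 := Rle_abs l); assert (Hl3 := Rle_abs (-l)); rewrite Rabs_Ropp in Hl3.
  apply le_epsilon; intros eps Heps.
  destruct (H1 (eps / (b - a))) as [delta [Hdel Hq]].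
  { apply Rdiv_lt_0_compat; lra. }
  set (s := Rmin (delta / 2) 1).
  assert (Hs : 0 < s) by (unfold s; apply Rmin_pos; lra).
  assert (Hs2 : s < delta).
  { unfold s. apply Rle_lt_trans with (delta/2); [apply Rmin_l|lra]. }
  specialize (Hq s ltac:(lra) ltac:(rewrite Rabs_pos_eq; lra)).
  pose proof (conv3 f Hc a b (b + s) ltac:(lra)) as C.
  assert (Hqs : (f (b + s) - f b) <= (l + eps / (b - a)) * s).
  { apply (Rmult_le_compat_r s) in Hq; [|lra].
    replace ((f (b + s) - f b) / s * s) with (f (b + s) - f b) in Hq by (field; lra).
    exact Hq. }
  assert (K : s * (f b - f a) <= (b - a) * ((l + eps / (b - a)) * s)).
  { apply Rle_trans with ((b - a) * (f (b + s) - f b)); [nra|].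
    apply Rmult_le_compat_l; lra. }
  replace ((b - a) * ((l + eps / (b - a)) * s)) with (s * ((b - a) * l + eps)) in K
    by (field; lra).
  apply Rmult_le_reg_l in K; [|lra]. nra.
Qed.

Lemma lip_lo f L (Hc : convex f)
  (Hd : forall x, exists l, upper_deriv f x l /\ Rabs l <= L) a b :
  a < b -> - L * (b - a) <= f b - f a.
Proof.
  intros Hab. destruct (Hd a) as [l [[_ H2] Hl]].
  assert (Hl2 := Rle_abs l); assert (Hl3 := Rle_abs (-l)); rewrite Rabs_Ropp in Hl3.
  assert (forall eps, 0 < eps -> (l - eps) * (b - a) <= f b - f a).
  { intros eps Heps.
    destruct (H2 eps (b - a) Heps ltac:(lra)) as [s [Hs0 [Hsa Hq]]].
    set (q := (f (a + s) - f a) / s) in Hq.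
    assert (Hqs : q * s = f (a + s) - f a) by (unfold q; field; lra).
    assert (K : q * (b - a) <= f b - f a).
    { destruct (Rlt_or_le 0 s) as [Hp|Hn].
      - rewrite Rabs_pos_eq in Hsa by lra.
        pose proof (conv3 f Hc a (a + s) b ltac:(lra)) as C.
        apply (Rmult_le_reg_l s); [lra|]. nra.
      - assert (s < 0) by lra.
        rewrite Rabs_left in Hsa by lra.
        pose proof (conv3 f Hc (a + s) a b ltac:(lra)) as C.
        apply (Rmult_le_reg_l (-s)); [lra|]. nra. }
    nra. }
  assert (- L * (b - a) - f b + f a <= 0); [|lra].
  apply Rnot_lt_le; intro Hc'.
  set (e := (- L * (b - a) - f b + f a) / (2 * (b - a))).
  assert (He : 0 < e) by (unfold e; apply Rdiv_lt_0_compat; lra).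
  specialize (H e He).
  assert (e * (b - a) = (- L * (b - a) - f b + f a) / 2) by (unfold e; field; lra).
  nra.
Qed.

Lemma lip f L (Hc : convex f)
  (Hd : forall x, exists l, upper_deriv f x l /\ Rabs l <= L) a b :
  f a - f b <= L * Rabs (a - b).
Proof.
  destruct (Rtotal_order a b) as [H|[H|H]].
  - rewrite Rabs_left by lra. pose proof (lip_lo f L Hc Hd a b H). lra.
  - subst. replace (b - b) with 0 by ring; rewrite Rabs_R0. assert (0 <= L).
    { destruct (Hd b) as [l [_ Hl]]. pose proof (Rabs_pos l). lra. }
    lra.
  - rewrite Rabs_pos_eq by lra. pose proof (lip_up f L Hc Hd b a H). lra.
Qed.

Lemma phi0_lb w : Rabs w - 1 / 2 <= phi0 w.
Proof.
  unfold phi0. destruct (Rle_dec (Rabs w) 1).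
  - rewrite <- (pow2_abs w). pose proof (Rabs_pos w). nra.
  - lra.
Qed.

Lemma phi0_small w : Rabs w <= 1 -> phi0 w = w ^ 2 / 2.
Proof. intros H. unfold phi0. destruct (Rle_dec (Rabs w) 1); [reflexivity|lra]. Qed.

Lemma Inf_le E : (exists m, is_glb E m) -> forall v, E v -> Inf E <= v.
Proof.
  intros Hex v Hv. unfold Inf.
  destruct (excluded_middle_informative (exists m, is_glb E m)) as [H|H].
  - destruct (constructive_indefinite_description _ H) as [m Hm]. simpl.
    apply Hm, Hv.
  - contradiction.
Qed.

Lemma glb_exists E M : (forall v, E v -> M <= v) -> (exists v, E v) ->
  exists m, is_glb E m.
Proof.
  intros Hb [v0 Hv0].
  destruct (completeness (fun w => E (- w))) as [m [Hm1 Hm2]].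
  - exists (- M). intros w Hw. specialize (Hb _ Hw). lra.
  - exists (- v0). rewrite Ropp_involutive. exact Hv0.
  - exists (- m). split.
    + intros v Hv. assert (- v <= m); [|lra]. apply Hm1. rewrite Ropp_involutive; exact Hv.
    + intros b Hbb. assert (m <= - b); [|lra]. apply Hm2.
      intros w Hw. specialize (Hbb _ Hw). lra.
Qed.

Lemma keyG (C1 h : R) f (Hc : convex f) x z :
  0 < C1 -> 0 < h -> Rabs (x - z) <= h -> 0 <= f x - f z <= 1 / C1 ->
  exists y, f y + / C1 * phi0 ((x - y) / h) <= f x - C1 / 2 * (f x - f z) ^ 2.
Proof.
  intros HC Hh Hxz [HD1 HD2].
  set (D := f x - f z) in *.
  set (u := C1 * D).
  assert (Hu : 0 <= u <= 1).
  { unfold u; split; [nra|].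
    apply (Rmult_le_compat_l C1) in HD2; [|lra].
    replace (C1 * (1 / C1)) with 1 in HD2 by (field; lra). lra. }
  exists ((1 - u) * x + (1 - (1 - u)) * z).
  pose proof (Hc x z (1 - u) ltac:(lra)) as Hf.
  replace ((x - ((1 - u) * x + (1 - (1 - u)) * z)) / h) with (u * ((x - z) / h))
    by (field; lra).
  assert (Hw : Rabs ((x - z) / h) <= 1).
  { unfold Rdiv. rewrite Rabs_mult, Rabs_inv, (Rabs_pos_eq h) by lra.
    apply (Rmult_le_reg_r h); [lra|]. rewrite Rmult_assoc, Rinv_l; lra. }
  set (w := (x - z) / h) in *.
  assert (Hw2 : w ^ 2 <= 1).
  { rewrite <- (pow2_abs w). pose proof (Rabs_pos w). nra. }
  rewrite phi0_small.
  2:{ rewrite Rabs_mult, (Rabs_pos_eq u) by lra. pose proof (Rabs_pos w). nra. }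
  assert (HP : (u * w) ^ 2 / 2 <= u ^ 2 / 2) by nra.
  assert (HI : 0 < / C1) by (apply Rinv_0_lt_compat; lra).
  apply Rmult_le_compat_l with (r := / C1) in HP; [|lra].
  assert (E1 : / C1 * (u ^ 2 / 2) = C1 * D ^ 2 / 2) by (unfold u; field; lra).
  assert (E2 : (1 - u) * f x + (1 - (1 - u)) * f z = f x - C1 * D ^ 2)
    by (unfold u, D; ring).
  lra.
Qed.

Theorem lemma2p3 (C1 h : R) (f : R -> R) (x0 : ext_point) :
  0 < C1 -> 0 < h ->
  convex f ->
  (forall x, exists l, upper_deriv f x l /\ Rabs l <= 1 / (C1 * h)) ->
  valid_x0 f x0 ->
  forall x : R,
    infconv f (fun z => / C1 * phi0 (z / h)) x
      <= f x - C1 / 2 * (Rabs (Dgrad f h x0 x)) ^ 2.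
Proof.
  intros HC Hh Hc Hd Hx0 x.
  set (L := 1 / (C1 * h)) in *.
  assert (HL : L * h = 1 / C1) by (unfold L; field; lra).
  assert (HLp : 0 < L) by (unfold L; apply Rdiv_lt_0_compat; nra).
  pose proof (lip f L Hc Hd) as Hlip.
  assert (Step : forall z, Rabs (x - z) <= h -> 0 <= f x - f z ->
            infconv f (fun z => / C1 * phi0 (z / h)) x <= f x - C1 / 2 * (f x - f z) ^ 2).
  { intros z Hz HD.
    assert (HD2 : f x - f z <= 1 / C1).
    { pose proof (Hlip x z). nra. }
    destruct (keyG C1 h f Hc x z HC Hh Hz (conj HD HD2)) as [y Hy].
    eapply Rle_trans; [|exact Hy].
    unfold infconv. apply Inf_le; [|exists y; reflexivity].
    apply glb_exists with (f x - / C1 * (1 / 2)).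
    - intros v [y' ->].
      pose proof (Hlip x y') as H1.
      pose proof (phi0_lb ((x - y') / h)) as H2.
      assert (HI : 0 < / C1) by (apply Rinv_0_lt_compat; lra).
      assert (H3 : Rabs ((x - y') / h) = Rabs (x - y') / h).
      { unfold Rdiv. rewrite Rabs_mult, Rabs_inv, (Rabs_pos_eq h) by lra. reflexivity. }
      rewrite H3 in H2.
      assert (H4 : / C1 * (Rabs (x - y') / h) = L * Rabs (x - y'))
        by (unfold L; field; lra).
      apply Rmult_le_compat_l with (r := / C1) in H2; [|lra].
      nra.
    - exists (f x + / C1 * phi0 ((x - x) / h)). exists x. reflexivity. }
  rewrite pow2_abs. clear Hd.
  destruct x0 as [r| |]; simpl in *.
  - destruct (Rlt_dec (r + h) x).
    + apply Step.
      * replace (x - (x - h)) with h by ring. rewrite Rabs_pos_eq; lra.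
      * pose proof (conv3 f Hc r (x - h) x ltac:(lra)) as C.
        specialize (Hx0 (x - h)).
        assert ((x - h - r) * f (x - h) <= (x - h - r) * f x) by nra.
        apply Rmult_le_reg_l in H; lra.
    + destruct (Rle_dec (r - h) x).
      * apply Step; [apply Rabs_le; lra|]. specialize (Hx0 x). lra.
      * apply Step.
        -- replace (x - (x + h)) with (- h) by ring. rewrite Rabs_Ropp, Rabs_pos_eq; lra.
        -- pose proof (conv3 f Hc x (x + h) r ltac:(lra)) as C.
           specialize (Hx0 (x + h)).
           assert ((r - x - h) * f (x + h) <= (r - x - h) * f x) by nra.
           apply Rmult_le_reg_l in H; lra.
  - apply Step.
    + replace (x - (x - h)) with h by ring. rewrite Rabs_pos_eq; lra.
    + destruct Hx0 as [_ M]. specialize (M (x - h) x ltac:(lra)). lra.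
  - apply Step.
    + replace (x - (x + h)) with (- h) by ring. rewrite Rabs_Ropp, Rabs_pos_eq; lra.
    + destruct Hx0 as [_ M]. specialize (M x (x + h) ltac:(lra)). lra.
Qed.
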